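(* Let $M$ be a colored dependency multigraph with $n$ nodes and $m$ edges (counted over all alternatives of all nodes) and with final node $F$. Then the multigraph collapse algorithm, run on $(M,F)$, terminates and runs in time $\mathcal{O}(d\cdot(n+m))$, where $d$ is the number of collapsed graphs (DAGs) it outputs.
   Context: A \emph{colored dependency multigraph} consists of a finite set $V$ of $n$ nodes (blocks), a distinguished final node $F\in V$, and for each node $v\in V$ a finite (possibly empty) list of \emph{alternatives} (colors). Each alternative of $v$ is a set of nodes on which $v$ depends, and an edge $(u,v)$ of a given color is present exactly when $u$ belongs to that alternative of $v$. The same pair of nodes may be joined by edges of several colors. A node with no alternatives has no dependencies. The graph obtained by following all edges of all colors is assumed acyclic. The total number of edges over all alternatives of all nodes is $m$. A node is \emph{branching} if it has at least two alternatives. Work in the standard RAM model. \textbf{DFS-Until.} Given a graph $G$ of this kind and the node $F$, DFS-Until performs a depth-first search backward from $F$. It follows each visited node's edges to its dependencies, visits each node at most once, and records the visited nodes together with their incoming dependency edges as a graph $D$. It halts and returns $(v,D)$ as soon as it visits a branching node $v$. If the search completes without visiting any branching node, it returns $(\mathrm{NULL},D)$. One call runs in time $\mathcal{O}(n+m)$. \textbf{Collapse algorithm.} Initialize an empty output list and a queue containing $M$. While the queue is nonempty: \begin{itemize} \item dequeue a graph $G$ and compute $(v,D)=\text{DFS-Until}(G,F)$; \item if $v=\mathrm{NULL}$, append $D$ to the output; \item otherwise, for each alternative $c$ of $v$ in $G$, enqueue a copy of $G$ in which $v$ keeps only alternative $c$ and the edges of all other alternatives of $v$ are deleted. \end{itemize}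 The output is a list of $d$ directed acyclic graphs. *)

(* Defs.v *)
From mathcomp Require Import all_boot.
Set Implicit Arguments. Unset Strict Implicit. Unset Printing Implicit Defensive.

(* A colored dependency multigraph on the node set 'I_n : each node v has a
   (possibly empty) list of alternatives (colors); each alternative is the
   set of nodes v depends on under that color. *)
Definition graph (n : nat) := 'I_n -> seq {set 'I_n}.

Definition branching n (G : graph n) (v : 'I_n) : bool := 1 < size (G v).

Definition dep_edge n (G : graph n) : rel 'I_n :=
  fun u v => has (fun A : {set 'I_n} => u \in A) (G v).

Definition acyclic n (G : graph n) : Prop :=
  forall u v, dep_edge G u v -> ~~ connect (dep_edge G) v u.

Definition num_edges n (G : graph n) : nat := \sum_(v < n) \sum_(A <- G v) #|A|.

(* Cost model (RAM): the DFS is an explicit-stack preorder DFS following each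
   visited node's dependency edges backward from F.
   Result: None if the fuel ran out (treated as non-termination); otherwise
   Some (found branching node or None, visited nodes, cost). *)
Fixpoint dfs_until n (G : graph n) (fuel : nat) (stack visited : seq 'I_n)
  (cost : nat) : option (option 'I_n * seq 'I_n * nat) :=
  match fuel with
  | 0 => None
  | fuel'.+1 =>
    match stack with
    | [::] => Some (None, visited, cost)
    | v :: st =>
      if v \in visited then dfs_until G fuel' st visited cost.+1
      else if branching G v then Some (Some v, v :: visited, cost.+1)
      else
        let deps := flatten [seq enum (pred_of_set A) | A : {set 'I_n} <- G v] in
        dfs_until G fuel' (deps ++ st) (v :: visited) (cost + 1 + size deps)
    end
  end.

Definition restrict n (G : graph n) (vis : seq 'I_n) : graph n :=
  fun u => if u \in vis then G u else [::].

Definition keep_alt n (G : graph n) (v : 'I_n) (c : {set 'I_n}) : graph n :=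
  fun u => if u == v then [:: c] else G u.

(* Each iteration costs 1 (dequeue) + the DFS cost; outputting D
   costs n + m (building D); each enqueued copy costs n + m (copying G).
   Returns None if the outer fuel (number of iterations) runs out. *)
Fixpoint collapse n (F : 'I_n) (fuel : nat) (queue : seq (graph n))
  (out : seq ({set 'I_n} * graph n)) (time : nat)
  : option (seq ({set 'I_n} * graph n) * nat) :=
  match fuel with
  | 0 => None
  | fuel'.+1 =>
    match queue with
    | [::] => Some (out, time)
    | G :: q =>
      match dfs_until G (n + num_edges G).+1 [:: F] [::] 0 with
      | None => None
      | Some (None, vis, c) =>
          collapse F fuel' q (rcons out ([set x in vis], restrict G vis))
                   (time + 1 + c + (n + num_edges G))
      | Some (Some v, _, c) =>
          collapse F fuel' (q ++ [seq keep_alt G v A | A <- G v]) out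
                   (time + 1 + c + size (G v) * (n + num_edges G))
      end
    end
  end.

(* Main.v *)
Require Import Defs.
From mathcomp Require Import all_boot.
From mathcomp Require Import zify.
Set Implicit Arguments. Unset Strict Implicit. Unset Printing Implicit Defensive.

Definition sz n (G : graph n) (v : 'I_n) := \sum_(A <- G v) #|A|.
Definition Pv n (G : graph n) (vis : seq 'I_n) := \sum_(v < n | v \notin vis) sz G v.

Lemma size_deps n (G : graph n) v :
  size (flatten [seq enum (pred_of_set A) | A : {set 'I_n} <- G v]) = sz G v.
Proof.
rewrite /sz; elim: (G v) => [|A s IH] /=; first by rewrite big_nil.
by rewrite size_cat IH big_cons cardE.
Qed.

Lemma Pv_nil n (G : graph n) : Pv G [::] = num_edges G.
Proof. by rewrite /Pv /num_edges; apply: eq_bigl => u. Qed.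

Lemma Pv_cons n (G : graph n) v vis : v \notin vis ->
  Pv G vis = sz G v + Pv G (v :: vis).
Proof.
move=> Hv; rewrite /Pv (bigD1 v) //=; congr (_ + _).
by apply: eq_bigl => u; rewrite in_cons negb_or andbC.
Qed.

Lemma dfs_ok n (G : graph n) fuel st vis cost :
  size st + Pv G vis < fuel ->
  exists r vis' c', dfs_until G fuel st vis cost = Some (r, vis', c') /\
    c' <= cost + size st + 2 * Pv G vis /\
    (forall v, r = Some v -> branching G v).
Proof.
elim: fuel st vis cost => [|fuel IH] st vis cost // Hf.
case: st Hf => [|v st] Hf /=.
  by exists None, vis, cost; split => //; split => //; lia.
case: ifP => Hv.
  have [r [vis' [c' [E [Hc Hr]]]]] := IH st vis cost.+1 ltac:(simpl in Hf; lia).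
  by exists r, vis', c'; split => //; split => //; lia.
case: ifP => Hb.
  exists (Some v), (v :: vis), cost.+1; split => //; split; first lia.
  by move=> u [<-].
have HP := Pv_cons G (negbT Hv).
have Hd := size_deps G v.
set deps := flatten _ in Hd *. clearbody deps.
have Hlt : size (deps ++ st) + Pv G (v :: vis) < fuel.
  rewrite size_cat; move: Hf => /=; rewrite HP Hd; move: (sz G v) (Pv G (v :: vis)) (size st) => a b c0; lia.
have [r [vis' [c' [E [Hc Hr]]]]] :=
  IH (deps ++ st) (v :: vis) (cost + 1 + size deps) Hlt.
exists r, vis', c'; split => //; split => //.
move: Hc; rewrite size_cat HP Hd; move: (sz G v) (Pv G (v :: vis)) (size st) (size deps) => a b c0 d0; lia.
Qed.

Definition Ssz n (G : graph n) := \sum_(u < n) size (G u).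
Definition mu n (q : seq (graph n)) := sumn [seq 3 ^ Ssz G | G <- q].

Lemma Ssz_split n (G : graph n) v :
  Ssz G = size (G v) + \sum_(i < n | i != v) size (G i).
Proof. by rewrite /Ssz (bigD1 v). Qed.

Lemma S_keep n (G : graph n) v A : Ssz (keep_alt G v A) + size (G v) = Ssz G + 1.
Proof.
rewrite (Ssz_split _ v) (Ssz_split G v) /keep_alt eqxx.
have -> : \sum_(i < n | i != v) size (if i == v then [:: A] else G i) =
          \sum_(i < n | i != v) size (G i).
  by apply: eq_bigr => i /negbTE ->.
move: (\sum_(i < n | i != v) size (G i)) => x /=; lia.
Qed.

Lemma S_ge n (G : graph n) v : size (G v) <= Ssz G.
Proof. by rewrite /Ssz (bigD1 v) //= leq_addr. Qed.

Lemma card_le_sum n (A : {set 'I_n}) s : A \in s -> #|A| <= \sum_(B <- s) #|B|.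
Proof.
elim: s => [|B s IH] //; rewrite in_cons big_cons; case/orP => [/eqP ->|/IH H].
  exact: leq_addr.
exact: (leq_trans H (leq_addl _ _)).
Qed.

Lemma E_keep n (G : graph n) v A : A \in G v ->
  num_edges (keep_alt G v A) <= num_edges G.
Proof.
move=> HA; rewrite /num_edges [in X in X <= _](bigD1 v) //= [in X in _ <= X](bigD1 v) //=.
rewrite /keep_alt eqxx big_cons big_nil addn0.
have -> : \sum_(i < n | i != v) \sum_(A0 <- (if i == v then [:: A] else G i)) #|A0| =
          \sum_(i < n | i != v) \sum_(A0 <- G i) #|A0|.
  by apply: eq_bigr => i /negbTE ->.
by rewrite leq_add2r card_le_sum.
Qed.

Lemma sumn_const T (s : seq T) (f : T -> nat) c :
  (forall x, f x = c) -> sumn (map f s) = size s * c.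
Proof. by move=> Hf; elim: s => [|x s IH] //=; rewrite IH Hf mulSn. Qed.

Lemma pow3 j : j.+2 < 3 ^ j.+1.
Proof. elim: j => [|j IH] //; rewrite expnS; lia. Qed.

Lemma mu_children n (G : graph n) v : 1 < size (G v) ->
  mu [seq keep_alt G v A | A <- G v] < 3 ^ Ssz G.
Proof.
move=> Hk; rewrite /mu -map_comp.
have HS := S_keep G v; have Hge := S_ge G v.
rewrite (@sumn_const _ _ _ (3 ^ (Ssz G + 1 - size (G v)))); last first.
  by move=> A /=; congr (3 ^ _); have := HS A; lia.
set k := size (G v) in Hk Hge *.
have -> : 3 ^ Ssz G = 3 ^ (Ssz G + 1 - k) * 3 ^ (k - 1).
  by rewrite -expnD; congr (3 ^ _); lia.
rewrite mulnC ltn_pmul2l ?expn_gt0 //.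
clearbody k; case: k Hk {Hge} => [|[|j]] // _.
by have := pow3 j; rewrite subn1 /=.
Qed.

Lemma collapse_cons n (F : 'I_n) fuel G q out time :
  collapse F fuel.+1 (G :: q) out time =
  match dfs_until G (n + num_edges G).+1 [:: F] [::] 0 with
  | None => None
  | Some (None, vis, c) =>
      collapse F fuel q (rcons out ([set x in vis], restrict G vis))
               (time + 1 + c + (n + num_edges G))
  | Some (Some v, _, c) =>
      collapse F fuel (q ++ [seq keep_alt G v A | A <- G v]) out
               (time + 1 + c + size (G v) * (n + num_edges G))
  end.
Proof. by []. Qed.

Lemma loop n (F : 'I_n) (m A : nat) : 0 < n -> 6 * (n + m) <= A ->
  forall N q out time, mu q < N -> all (fun G => num_edges G <= m) q ->
  time + 3 * A <= 4 * A * size out + 3 * A * size q ->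
  exists fuel out' time', collapse F fuel q out time = Some (out', time') /\
    time' + 3 * A <= 4 * A * size out'.
Proof.
move=> Hn HA; elim=> [|N IH] q out time Hmu Hall Hinv //.
case: q Hmu Hall Hinv => [|G q] Hmu Hall Hinv.
  by exists 1, out, time; split => //; move: Hinv => /=; lia.
move/andP: Hall => [HG Hq].
have [r [vis [c [E [Hc Hr]]]]] :=
  @dfs_ok n G (n + num_edges G).+1 [:: F] [::] 0 ltac:(rewrite Pv_nil /=; lia).
rewrite Pv_nil /= in Hc.
have Hmu' : 3 ^ Ssz G + mu q < N.+1 by [].
have Hpos : 0 < 3 ^ Ssz G by rewrite expn_gt0.
case: r E Hr => [v|] E Hr.
- have Hb : 1 < size (G v) by exact: Hr v erefl.
  have Hch := mu_children Hb.
  set k := size (G v) in Hb Hch *.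
  have H1 : k * (n + num_edges G) <= k * A by rewrite leq_mul2l; apply/orP; right; lia.
  have H2 : 2 * A <= k * A by rewrite leq_mul2r Hb orbT.
  have M1 : mu (q ++ [seq keep_alt G v A | A <- G v]) < N.
    by rewrite /mu map_cat sumn_cat; rewrite /mu in Hch Hmu'; lia.
  have M2 : all (fun G => num_edges G <= m) (q ++ [seq keep_alt G v A | A <- G v]).
    rewrite all_cat; apply/andP; split; first exact: Hq.
    rewrite all_map; apply/allP => B HB /=.
    exact: leq_trans (E_keep HB) HG.
  have M3 : time + 1 + c + k * (n + num_edges G) + 3 * A <=
      4 * A * size out + 3 * A * size (q ++ [seq keep_alt G v A | A <- G v]).
    move: Hinv; rewrite size_cat size_map /= -/k; nia.
  have [fuel [out' [time' [E' H']]]] := IH _ _ _ M1 M2 M3.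
  by exists fuel.+1, out', time'; rewrite collapse_cons E.
- have M1 : mu q < N by rewrite /mu /= in Hmu'; rewrite /mu; lia.
  have M3 : time + 1 + c + (n + num_edges G) + 3 * A <=
      4 * A * size (rcons out ([set x in vis], restrict G vis)) + 3 * A * size q.
    move: Hinv; rewrite size_rcons /=; nia.
  have [fuel [out' [time' [E' H']]]] := IH _ _ _ M1 Hq M3.
  by exists fuel.+1, out', time'; rewrite collapse_cons E.
Qed.

Theorem mainTheorem1 :
  exists c : nat, forall (n : nat) (M : graph n) (F : 'I_n),
    acyclic M ->
    exists (fuel : nat) (out : seq ({set 'I_n} * graph n)) (time : nat),
      collapse F fuel [:: M] [::] 0 = Some (out, time) /\
      time <= c * (size out * (n + num_edges M)).
Proof.
exists 24 => n M F _.
have Hn : 0 < n by case: F => i /=; lia.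
have [fuel [out [time [E H]]]] :=
  @loop n F (num_edges M) (6 * (n + num_edges M)) Hn (leqnn _)
        (mu [:: M]).+1 [:: M] [::] 0 (ltnSn _) ltac:(by rewrite /= leqnn) ltac:(by rewrite /=; lia).
exists fuel, out, time; split => //; nia.
Qed.
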